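(* Let $\mathcal{T}$ be a finite tree, $w:V(\mathcal{T})\to\mathbb{R}_{\ge0}$, and let $C$ be a centroid tree of $(\mathcal{T},w)$. For every $\varepsilon>0$ there is a weight function $w':V(\mathcal{T})\to\mathbb{R}_{\ge0}$ with $\|w'-w\|_\infty<\varepsilon$ such that $C$ is the unique centroid tree of $(\mathcal{T},w')$.
   Context: For a subgraph $\mathcal{H}$, $w(\mathcal{H})=\sum_{x\in V(\mathcal{H})}w(x)$. A search tree on a tree $\mathcal{T}$ is a rooted tree $T$ with vertex set $V(\mathcal{T})$ defined recursively: its root is an arbitrary vertex $r$, and the children of $r$ are the roots of search trees built on the connected components of $\mathcal{T}-r$; a single-vertex tree has only itself as search tree. A vertex $v$ is a centroid of $(\mathcal{T},w)$ if each component $\mathcal{H}$ of $\mathcal{T}-v$ has $w(\mathcal{H})\le w(\mathcal{T})/2$. A search tree $T$ is a centroid tree if each vertex $x$ is a centroid of $(\mathcal{T}[V(T_x)],w)$, $T_x$ being the subtree of $T$ rooted at $x$. *)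

(* Defs.v *)
From HB Require Import structures.
From mathcomp Require Import all_boot all_order all_algebra.
From mathcomp Require Import reals.
Set Implicit Arguments. Unset Strict Implicit. Unset Printing Implicit Defensive.
Import Order.TTheory GRing.Theory Num.Theory.
Local Open Scope ring_scope.

Definition is_tree (V : finType) (e : rel V) : Prop :=
  [/\ 0 < #|V|, symmetric e, irreflexive e,
      (forall x y, connect e x y) &
      (* acyclic: no graph cycle (>= 3 distinct vertices, closed e-walk) *)
      (forall s : seq V, uniq s -> 2 < size s -> ~~ cycle e s)]%N.

Definition induced_rel (V : finType) (e : rel V) (S : {set V}) : rel V :=
  fun a b => [&& a \in S, b \in S & e a b].

Definition conn_in (V : finType) (e : rel V) (S : {set V}) : Prop :=
  forall x y, x \in S -> y \in S -> connect (induced_rel e S) x y.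

Definition component (V : finType) (e : rel V) (S C : {set V}) : Prop :=
  [/\ C \subset S, C != set0, conn_in e C &
      forall x y, x \in C -> y \in S :\: C -> ~~ e x y].

Definition wsum (R : realType) (V : finType) (w : V -> R) (S : {set V}) : R :=
  \sum_(x in S) w x.

Definition is_centroid (R : realType) (V : finType) (e : rel V) (w : V -> R)
    (S : {set V}) (v : V) : Prop :=
  v \in S /\
  forall H, component e (S :\ v) H -> wsum w H <= wsum w S / 2.

(* Rooted trees on vertex set V are given by a parent function
   p : V -> option V (None = root). *)
Definition par_rel (V : finType) (p : V -> option V) : rel V :=
  fun y z => p y == Some z.

Definition desc (V : finType) (p : V -> option V) (x : V) : {set V} :=
  [set y | connect (par_rel p) y x].

Definition rooted_tree (V : finType) (p : V -> option V) : Prop :=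
  exists r, p r = None /\ forall v, connect (par_rel p) v r.

(* Search tree on T (unfolded recursive definition): p is a rooted tree
   on V(T) and for every vertex x, the subtrees of the children of x are
   exactly the connected components of T[V(T_x)] - x. (Since the subtrees
   of the children of x partition V(T_x) \ x, it suffices to require that
   each of them is a component.) *)
Definition search_tree (V : finType) (e : rel V) (p : V -> option V) : Prop :=
  rooted_tree p /\
  forall x c, p c = Some x -> component e (desc p x :\ x) (desc p c).

Definition centroid_tree (R : realType) (V : finType) (e : rel V)
    (w : V -> R) (p : V -> option V) : Prop :=
  search_tree e p /\ forall x, is_centroid e w (desc p x) x.

(* Main.v *)
Require Import Defs.
From HB Require Import structures.
From mathcomp Require Import all_boot all_order all_algebra.
From mathcomp Require Import reals.
From mathcomp Require Import ring lra.
Import Order.TTheory GRing.Theory Num.Theory.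
Local Open Scope ring_scope.
Set Implicit Arguments. Unset Strict Implicit.

Lemma connect_in (V : finType) (r : rel V) (A : {set V}) a b :
  (forall u v, u \in A -> r u v -> v \in A) -> a \in A -> connect r a b -> b \in A.
Proof.
move=> HA aA /connectP [s ps ->]; elim: s a aA ps => [|z s IH] a aA //=.
case/andP=> raz ps; apply: IH ps; exact: HA raz.
Qed.

Lemma connect_restrict (V : finType) (r r' : rel V) (A : {set V}) a b :
  (forall u v, u \in A -> r u v -> (v \in A) && r' u v) -> a \in A ->
  connect r a b -> connect r' a b.
Proof.
move=> HA aA /connectP [s ps ->]; elim: s a aA ps => [|z s IH] a aA //=.
case/andP=> raz ps; case/andP: (HA _ _ aA raz) => zA r'az.
apply: connect_trans (connect1 r'az) _; exact: IH.
Qed.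

Lemma induced_sym (V : finType) (e : rel V) S :
  symmetric e -> symmetric (induced_rel e S).
Proof.
by move=> se a b; rewrite /induced_rel se andbCA.
Qed.

Lemma child_of (V : finType) (p : V -> option V) x y :
  y \in desc p x -> y != x -> exists c, p c = Some x /\ y \in desc p c.
Proof.
rewrite inE => /connectP [s ps ->]; elim/last_ind: s ps => [|s z _] //=.
  by rewrite eqxx.
rewrite rcons_path last_rcons => /andP [ps pz] _.
exists (last y s); split; first exact/eqP.
rewrite inE; apply/connectP; by exists s.
Qed.

Lemma comp_sub (V : finType) (e : rel V) S H1 H2 h y :
  component e S H1 -> component e S H2 -> h \in H1 -> h \in H2 -> y \in H1 ->
  y \in H2.
Proof.
case=> s1 _ c1 _ [s2 _ _ n2] h1 h2 y1.
apply: (@connect_in _ (induced_rel e H1) H2 h) h2 (c1 _ _ h1 y1).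
move=> u v uH2 /and3P [_ vH1 euv]; apply/negPn/negP => vn.
have: v \in S :\: H2 by rewrite inE vn (subsetP s1).
by move=> /(n2 _ _ uH2); rewrite euv.
Qed.

Lemma comp_eq (V : finType) (e : rel V) S H1 H2 h :
  component e S H1 -> component e S H2 -> h \in H1 -> h \in H2 -> H1 = H2.
Proof.
move=> c1 c2 h1 h2; apply/setP => y; apply/idP/idP.
  exact: comp_sub c1 c2 h1 h2.
exact: comp_sub c2 c1 h2 h1.
Qed.

Lemma conn_to_x (V : finType) (e : rel V) S x K y :
  conn_in e S -> x \in S -> component e (S :\ x) K -> y \in K ->
  connect (induced_rel e (x |: K)) y x.
Proof.
move=> cS xS [sK _ _ nK] yK.
have yS : y \in S by move: (subsetP sK _ yK); rewrite inE => /andP [].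
case/connectP: (cS _ _ yS xS) => s ps lx.
elim: s y yK {yS} ps lx => [|b s IH] y yK /=.
  move=> _ yx; move: (subsetP sK _ yK); rewrite -yx !inE eqxx; done.
case/andP=> /and3P [_ bS eyb] ps lx.
have yxK : y \in x |: K by rewrite inE yK orbT.
case: (eqVneq b x) => [bx|bnx].
  subst b; apply: connect1.
  by rewrite /induced_rel yxK setU11 eyb.
case bK: (b \in K).
  apply: connect_trans (connect1 (_ : induced_rel e (x |: K) y b)) (IH _ bK ps lx).
  by rewrite /induced_rel yxK inE bK orbT eyb.
have : b \in (S :\ x) :\: K by rewrite !inE bK bnx bS.
by move=> /(nK _ _ yK); rewrite eyb.
Qed.

Definition compx (V : finType) (e : rel V) (T : {set V}) x : {set V} :=
  [set y | connect (induced_rel e T) x y].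

Lemma compx_comp (V : finType) (e : rel V) (T : {set V}) x :
  symmetric e -> x \in T -> component e T (compx e T x).
Proof.
move=> se xT.
have sub : compx e T x \subset T.
  apply/subsetP => y; rewrite inE; apply: connect_in xT.
  by move=> u v _ /and3P [].
split=> //.
- by apply/set0Pn; exists x; rewrite inE connect0.
- move=> a b; rewrite !inE => xa xb.
  have ab : connect (induced_rel e T) a b.
    apply: connect_trans _ xb.
    by rewrite (sym_connect_sym (induced_sym T se)).
  apply: (connect_restrict (A := compx e T x)) ab; last by rewrite inE.
  move=> u v; rewrite !inE => xu uv.
  have xv := connect_trans xu (connect1 uv).
  by case/and3P: uv => _ _ euv; rewrite /induced_rel !inE xu xv euv.
- move=> y1 y2 y1H; have y1T := subsetP sub _ y1H; move: y1H.
  rewrite !inE => xy1 /andP [ny2 y2T]; apply/negP => e12.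
  move/negP: ny2; apply; apply: connect_trans xy1 (connect1 _).
  by rewrite /induced_rel y2T e12 y1T.
Qed.

Lemma wsum_sub (R : realType) (V : finType) (w : V -> R) (A B : {set V}) :
  (forall u, 0 <= w u) -> A \subset B -> wsum w A <= wsum w B.
Proof.
move=> w0 AB; rewrite /wsum [X in _ <= X](big_setID A) /= (setIidPr AB) lerDl.
by apply: sumr_ge0 => i _.
Qed.

Lemma wsum_split (R : realType) (V : finType) (w : V -> R) (A B : {set V}) :
  B \subset A -> wsum w A = wsum w B + wsum w (A :\: B).
Proof.
by move=> BA; rewrite /wsum (big_setID B) /= (setIidPr BA).
Qed.

Lemma uniq_centroid (R : realType) (V : finType) (e : rel V) (w : V -> R) S x v :
  (forall u, 0 <= w u) -> symmetric e -> conn_in e S -> x \in S ->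
  (forall y, y \in S :\ x -> exists K, component e (S :\ x) K /\ y \in K) ->
  (forall H, component e (S :\ x) H -> wsum w H < wsum w S / 2) ->
  is_centroid e w S v -> v = x.
Proof.
move=> w0 se cS xS hK hlt [vS hv].
case: (eqVneq v x) => // vx.
have [K [cK vK]] : exists K, component e (S :\ x) K /\ v \in K.
  by apply: hK; rewrite !inE vx.
have xT : x \in S :\ v by rewrite !inE eq_sym vx.
have cH := compx_comp se xT.
have le1 := hv _ cH.
have KS : K \subset S.
  case: cK => sK _ _ _; apply/subsetP => y /(subsetP sK); rewrite inE.
  by case/andP.
have sub : S :\: K \subset compx e (S :\ v) x.
  apply/subsetP => y; rewrite !inE => /andP [yK yS].
  case: (eqVneq y x) => [->|yx]; first exact: connect0.
  have [Ky [cKy yKy]] : exists K, component e (S :\ x) K /\ y \in K.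
    by apply: hK; rewrite !inE yx.
  have vKy : v \notin Ky.
    apply/negP => vKy; move/negP: yK; apply.
    exact: comp_sub cKy cK vKy vK yKy.
  have := conn_to_x cS xS cKy yKy.
  move=> c; have c' : connect (induced_rel e (S :\ v)) y x.
    apply: (connect_restrict (A := setT)) c; last by rewrite inE.
    move=> u u' _ /and3P [uK u'K euu']; rewrite in_setT /induced_rel euu' andbT.
    case: cKy => sKy _ _ _.
    have memS : forall z, z \in x |: Ky -> z \in S :\ v.
      move=> z; rewrite !inE => /orP [/eqP ->|zK]; first by move: xT; rewrite !inE.
      move: (subsetP sKy _ zK); rewrite !inE => /andP [_ ->]; rewrite andbT.
      by apply/eqP => zv; move: vKy; rewrite -zv zK.
    by rewrite !memS.
  by rewrite (sym_connect_sym (induced_sym _ se)).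
have le2 := wsum_sub w0 sub.
have lt3 := hlt _ cK.
have eqS := wsum_split w KS.
have : wsum w S / 2 < wsum w S / 2.
  apply: (lt_le_trans _ le1); apply: (lt_le_trans _ le2).
  rewrite eqS in lt3 *.
  set a := wsum w K in lt3 *; set b := wsum w (S :\: K) in lt3 *.
  lra.
by rewrite ltxx.
Qed.

Lemma par_iter (V : finType) (p : V -> option V) a b :
  connect (par_rel p) a b -> exists n, iter n (fun v => odflt v (p v)) a = b.
Proof.
move=> c; set f := fun v => odflt v (p v).
have : fconnect f a b.
  apply: (connect_sub _ c) => u v /eqP puv; apply: connect1.
  by rewrite /frel /f /= puv.
by move=> fc; exists (findex f a b); exact: iter_findex.
Qed.

Lemma periodic_root (T : Type) (f : T -> T) z r q k :
  (0 < q)%N -> iter q f z = z -> iter k f z = r -> f r = r -> z = r.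
Proof.
move=> q0 hq hk fr.
have hm : forall t, iter (t * q) f z = z.
  elim=> [|t IH] //; by rewrite mulSn iterD IH hq.
have kq : (k <= k * q)%N by rewrite leq_pmulr.
rewrite -(hm k) -(subnK kq) iterD hk; exact: iter_fix.
Qed.

Lemma par_acyc (V : finType) (p : V -> option V) x y :
  rooted_tree p -> connect (par_rel p) y x -> connect (par_rel p) x y -> y = x.
Proof.
move=> [r [pr hr]] /par_iter [n hn] /par_iter [m hm].
set f := fun v => odflt v (p v) in hn hm.
have fr : f r = r by rewrite /f pr.
case: (posnP (n + m)) => [/eqP|pos].
  by rewrite addn_eq0 => /andP [/eqP n0 _]; rewrite -hn n0.
have [k hk] := par_iter (hr x).
have [k' hk'] := par_iter (hr y).
have hx : x = r.
  apply: (periodic_root pos _ hk fr); by rewrite iterD hm hn.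
have hy : y = r.
  apply: (periodic_root pos _ hk' fr); by rewrite addnC iterD hn hm.
by rewrite hx hy.
Qed.

Lemma root_all (V : finType) (p : V -> option V) x :
  rooted_tree p -> p x = None -> forall v, connect (par_rel p) v x.
Proof.
move=> [r [pr hr]] px.
have : x = r.
  case/connectP: (hr x) => [[|z s]] //= /andP [pxz _].
  by move: pxz; rewrite /par_rel px.
by move=> ->.
Qed.

Lemma desc_sub (V : finType) (p : V -> option V) x y :
  y \in desc p x -> desc p y \subset desc p x.
Proof.
rewrite inE => yx; apply/subsetP => z; rewrite !inE => zy.
exact: connect_trans zy yx.
Qed.

Lemma desc_sub_strict (V : finType) (p : V -> option V) x y :
  rooted_tree p -> y \in desc p x :\ x -> desc p y \subset desc p x :\ x.
Proof.
move=> rt; rewrite in_setD1 => /andP [yx yd]; apply/subsetP => z zy.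
rewrite in_setD1 (subsetP (desc_sub yd)) // andbT; apply/eqP => zx.
move: zy; rewrite zx inE => xy; move: yd; rewrite inE => yxc.
by move/eqP: yx; apply; exact: par_acyc rt yxc xy.
Qed.

Lemma conn_desc (V : finType) (e : rel V) (p : V -> option V) x :
  is_tree e -> search_tree e p -> conn_in e (desc p x).
Proof.
move=> [_ _ _ conn _] [rt hs].
case hx: (p x) => [y|].
  by case: (hs _ _ hx).
have all := root_all rt hx.
move=> a b _ _.
have E : induced_rel e (desc p x) =2 e.
  by move=> u v; rewrite /induced_rel !inE !all.
by rewrite (eq_connect E); exact: conn.
Qed.

Lemma children (V : finType) (e : rel V) (p : V -> option V) x y :
  search_tree e p -> y \in desc p x :\ x ->
  exists K, component e (desc p x :\ x) K /\ y \in K.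
Proof.
move=> [rt hs]; rewrite in_setD1 => /andP [yx yd].
have [c [pc yc]] := child_of yd yx.
by exists (desc p c); split=> //; exact: hs.
Qed.

Lemma a_bound (R : realType) (V : finType) (p : V -> option V) x :
  rooted_tree p ->
  \sum_(y in desc p x :\ x) ((#|V|.+1)%:R : R) ^+ #|desc p y|
   < ((#|V|.+1)%:R : R) ^+ #|desc p x|.
Proof.
move=> rt; set M : R := (#|V|.+1)%:R.
set m := #|desc p x :\ x|.
have hx : x \in desc p x by rewrite inE connect0.
have -> : #|desc p x| = m.+1 by rewrite (cardsD1 x) hx.
have M1 : 1 <= M by rewrite /M ler1n.
apply: (@le_lt_trans _ _ (\sum_(y in desc p x :\ x) M ^+ m)).
  apply: ler_sum => y yd; apply: ler_weXn2l => //.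
  exact: subset_leq_card (desc_sub_strict rt yd).
rewrite sumr_const -mulr_natr exprS [M * _]mulrC ltr_pM2l.
  rewrite /M ltr_nat ltnS; exact: max_card.
by rewrite exprn_gt0 // (lt_le_trans ltr01 M1).
Qed.

Lemma wsum_lin (R : realType) (V : finType) (w a : V -> R) (d : R) A :
  wsum (fun v => w v + d * a v) A = wsum w A + d * wsum a A.
Proof. by rewrite /wsum big_split /= mulr_sumr. Qed.

Unset Implicit Arguments.

Theorem mainTheorem18 (R : realType) (V : finType) (e : rel V)
  (w : V -> R) (C : V -> option V) :
  is_tree e ->
  (forall v, 0 <= w v) ->
  centroid_tree e w C ->
  forall eps : R, 0 < eps ->
  exists w' : V -> R,
    [/\ (forall v, 0 <= w' v),
        (forall v, `|w' v - w v| < eps),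
        centroid_tree e w' C &
        (forall C' : V -> option V, centroid_tree e w' C' -> C' =1 C)].
Proof.
move=> tree w0 [[rtC hsC] centC] eps eps0.
have se : symmetric e by case: tree.
set M : R := (#|V|.+1)%:R.
have M1 : 1 <= M by rewrite /M ler1n.
have M0 : 0 < M by apply: lt_le_trans ltr01 M1.
set a := fun v => M ^+ #|desc C v|.
set P := M ^+ #|V|.
have P0 : 0 < P by rewrite exprn_gt0.
set d := eps / (P *+ 2).
have d0 : 0 < d by rewrite divr_gt0 // pmulrn_rgt0.
have a0 : forall v, 0 <= a v by move=> v; rewrite exprn_ge0 // ltW.
have aP : forall v, a v <= P by move=> v; apply: ler_weXn2l => //; exact: max_card.
set w' := fun v => w v + d * a v.
have w'0 : forall v, 0 <= w' v by move=> v; rewrite addr_ge0 // mulr_ge0 // ltW.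
have strict : forall x H, component e (desc C x :\ x) H ->
    wsum w' H < wsum w' (desc C x) / 2.
  move=> x H cH.
  have [xin hc] := centC x.
  have h1 := hc H cH.
  rewrite !wsum_lin.
  have HS : H \subset desc C x :\ x by case: cH.
  have h2 := wsum_sub a0 HS.
  have h3 : wsum a (desc C x :\ x) < a x := @a_bound R V C x rtC.
  have h4 : wsum a (desc C x) = a x + wsum a (desc C x :\ x).
    by rewrite /wsum (big_setD1 x xin).
  have h5 : d * wsum a H < d * (wsum a (desc C x) / 2).
    by rewrite ltr_pM2l //; rewrite h4; lra.
  move: h5 h1; rewrite mulrA.
  set A := d * wsum a H; set B := d * wsum a (desc C x).
  set X := wsum w H; set Y := wsum w (desc C x).
  lra.
exists w'; split => //.
- move=> v; rewrite /w' /= addrAC subrr add0r ger0_norm; last by rewrite mulr_ge0 // ltW.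
  apply: (@le_lt_trans _ _ (d * P)); first by rewrite ler_pM2l.
  have -> : d * P = eps / 2.
    rewrite /d -mulr_natr; field.
    by rewrite gt_eqF.
  lra.
- split; first by split.
  move=> x; split; first by rewrite inE connect0.
  by move=> H cH; apply: ltW; exact: strict.
move=> C' [[rtC' hsC'] centC'].
have w'0' : forall u, 0 <= w' u := w'0.
have uc : forall x v, is_centroid e w' (desc C x) v -> v = x.
  move=> x v hv.
  apply: (uniq_centroid w'0' se (@conn_desc V e C x tree (conj rtC hsC))) hv.
  - by rewrite inE connect0.
  - by move=> y hy; apply: children (conj rtC hsC) hy.
  - exact: strict.
have step : forall z c, desc C' z = desc C z -> C' c = Some z ->
    desc C' c = desc C c /\ C' c = C c.
  move=> z c Ez Hc.
  have cc := hsC' _ _ Hc; rewrite Ez in cc.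
  have cin : c \in desc C' c by rewrite inE connect0.
  have cz : c \in desc C z :\ z by case: cc => sub _ _ _; exact: subsetP sub _ cin.
  move: cz; rewrite in_setD1 => /andP [cnz czd].
  have [c2 [Cc2 cc2]] := child_of czd cnz.
  have cc2' := hsC _ _ Cc2.
  have Ed := comp_eq cc cc2' cin cc2.
  have c_eq : c = c2.
    apply: uc; rewrite -Ed; exact: centC'.
  by split; [rewrite Ed c_eq | rewrite Hc -Cc2 c_eq].
have [r' [Cr' allr']] := rtC'.
have [r [Cr allr]] := rtC.
have Er : desc C' r' = desc C r.
  apply/setP => v; rewrite !inE.
  by rewrite (root_all rtC' Cr') (root_all rtC Cr).
have rr : r' = r.
  by apply: uc; rewrite -Er; exact: centC'.
move=> v.
suff : desc C' v = desc C v /\ C' v = C v by case.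
case/connectP: (allr' v) => s ps lv.
elim: s v ps lv => [|z s IH] v /=.
  by move=> _ <-; rewrite Er Cr' rr Cr.
case/andP => /eqP Cvz ps lv.
have [Ez _] := IH z ps lv.
exact: step Ez Cvz.
Qed.
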